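(* Let $\Psi=(X,A,q,g)$ be a standard MDP with $X$ a compact subset of a simplex $\Delta(K)$ ($K$ finite), satisfying for all $x,y\in X$, $a\in A$, $f\in D_1$ and $\alpha,\beta\ge0$: - $|\alpha f(q(x,a))-\beta f(q(y,a))|\le\|\alpha x-\beta y\|_1$, and - $|\alpha g(x,a)-\beta g(y,a)|\le\|\alpha x-\beta y\|_1$. Let $Z=\Delta_f(X)\times[0,1]$ with metric $d((u,y),(u',y'))=\max(d_*(u,u'),|y-y'|)$. Then: 1. $\hat F$ is affine: $\hat F(\lambda z+(1-\lambda)z')=\lambda\hat F(z)+(1-\lambda)\hat F(z')$ for $z,z'\in Z$ and $\lambda\in[0,1]$ (Minkowski combination on the right). 2. $\hat F$ is non expansive: for all $z,z'\in Z$ and $w\in\hat F(z)$ there exists $w'\in\hat F(z')$ with $d(w,w')\le d(z,z')$.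
   Context: $q:X\times A\to\Delta_f(X)$ and $g:X\times A\to[0,1]$, extended linearly in the action to $\Delta_f(A)$. $D_1=\{f\in\mathcal C(\Delta(K)):\ \forall x,y,\ \forall a,b\ge0,\ af(x)-bf(y)\le\|ax-by\|_1\}$, with $f$ extended linearly to finitely supported probabilities, and $d_*(u,v)=\sup_{f\in D_1}\big(f(u)-f(v)\big)$. For $(u,y)\in Z$, $$\hat F(u,y)=\Big\{\Big(\sum_xu(x)q(x,\sigma(x)),\ \sum_xu(x)g(x,\sigma(x))\Big):\ \sigma:X\to\Delta_f(A)\Big\}.$$ *)

(* Defs.v *)
From Stdlib Require Import Reals Lra List Classical ClassicalEpsilon FunctionalExtensionality.
Open Scope R_scope.
Set Implicit Arguments.

(* K = {0,...,n-1}; a point of R^K is a function nat -> R (coordinates >= n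
   are required to vanish on the simplex, so that points are canonical). *)
Definition point := nat -> R.

Definition sumK (n : nat) (h : nat -> R) : R :=
  fold_right (fun i acc => h i + acc) 0 (seq 0 n).

Definition norm1 (n : nat) (x : point) : R := sumK n (fun i => Rabs (x i)).

Definition simplex (n : nat) (x : point) : Prop :=
  (forall i, (i < n)%nat -> 0 <= x i) /\
  (forall i, (n <= i)%nat -> x i = 0) /\
  sumK n x = 1.

Definition lincomb (a : R) (x : point) (b : R) (y : point) : point :=
  fun i => a * x i - b * y i.

Definition compact1 (n : nat) (X : point -> Prop) : Prop :=
  forall u : nat -> point, (forall k, X (u k)) ->
  exists (phi : nat -> nat) (x : point),
    (forall k, (phi k < phi (S k))%nat) /\ X x /\
    forall eps, 0 < eps -> exists N, forall k, (N <= k)%nat ->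
      norm1 n (lincomb 1 (u (phi k)) 1 x) < eps.

Definition fin_supp (T : Type) (u : T -> R) (s : list T) : Prop :=
  NoDup s /\ forall x, u x <> 0 -> In x s.

(* fsum u h = sum_{x in supp u} u(x) h(x)   (0 if support is infinite) *)
Definition fsum (T : Type) (u : T -> R) (h : T -> R) : R :=
  match excluded_middle_informative (exists s, fin_supp u s) with
  | left H =>
      fold_right (fun x acc => u x * h x + acc) 0
        (proj1_sig (constructive_indefinite_description _ H))
  | right _ => 0
  end.

Definition distf (T : Type) (S : T -> Prop) (u : T -> R) : Prop :=
  (forall x, 0 <= u x) /\ (forall x, u x <> 0 -> S x) /\
  (exists s, fin_supp u s) /\ fsum u (fun _ => 1) = 1.

Definition cont_simplex (n : nat) (f : point -> R) : Prop :=
  forall x, simplex n x -> forall eps, 0 < eps -> exists delta, 0 < delta /\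
    forall y, simplex n y -> norm1 n (lincomb 1 x 1 y) < delta ->
      Rabs (f x - f y) < eps.

Definition D1 (n : nat) (f : point -> R) : Prop :=
  cont_simplex n f /\
  forall x y, simplex n x -> simplex n y -> forall a b, 0 <= a -> 0 <= b ->
    a * f x - b * f y <= norm1 n (lincomb a x b y).

Definition dstar_set (n : nat) (u v : point -> R) (t : R) : Prop :=
  exists f, D1 n f /\ t = fsum u f - fsum v f.

Definition dstar (n : nat) (u v : point -> R) : R :=
  match excluded_middle_informative
          (bound (dstar_set n u v) /\ exists t, dstar_set n u v t) with
  | left H => proj1_sig (completeness _ (proj1 H) (proj2 H))
  | right _ => 0
  end.

Definition Zelt := ((point -> R) * R)%type.

Definition inZ (X : point -> Prop) (z : Zelt) : Prop :=
  distf X (fst z) /\ 0 <= snd z <= 1.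

Definition dZ (n : nat) (z z' : Zelt) : R :=
  Rmax (dstar n (fst z) (fst z')) (Rabs (snd z - snd z')).

Definition combZ (l : R) (z z' : Zelt) : Zelt :=
  (fun x => l * fst z x + (1 - l) * fst z' x, l * snd z + (1 - l) * snd z').

Definition qext (A : Type) (q : point -> A -> point -> R) (x : point) (s : A -> R)
  : point -> R := fun x' => fsum s (fun a => q x a x').
Definition gext (A : Type) (g : point -> A -> R) (x : point) (s : A -> R) : R :=
  fsum s (fun a => g x a).

Definition Fhat (A : Type) (X : point -> Prop) (q : point -> A -> point -> R)
  (g : point -> A -> R) (z w : Zelt) : Prop :=
  exists sigma : point -> A -> R,
    (forall x, X x -> distf (fun _ : A => True) (sigma x)) /\
    w = ((fun x' => fsum (fst z) (fun x => qext q x (sigma x) x')),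
         fsum (fst z) (fun x => gext g x (sigma x))).

(* Main.v *)
Require Import Defs.
From Stdlib Require Import Reals.
From Stdlib Require Import Lra Lia List Classical ClassicalEpsilon FunctionalExtensionality Permutation.
Import ListNotations.
Open Scope R_scope.


Definition lsum {T} (l : list T) (h : T -> R) : R :=
  fold_right (fun i acc => h i + acc) 0 l.

Lemma lsum_cons {T} (a:T) l h : lsum (a::l) h = h a + lsum l h.
Proof. reflexivity. Qed.
Lemma lsum_nil {T} h : lsum (@nil T) h = 0.
Proof. reflexivity. Qed.

Lemma lsum_app {T} (l1 l2 : list T) h : lsum (l1++l2) h = lsum l1 h + lsum l2 h.
Proof. induction l1 as [|a l1 IH]; simpl app; rewrite ?lsum_cons, ?lsum_nil; [ring| rewrite IH; ring]. Qed.

Lemma lsum_map {T U} (f : T -> U) l h : lsum (map f l) h = lsum l (fun x => h (f x)).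
Proof. induction l as [|a l IH]; simpl map; rewrite ?lsum_cons, ?lsum_nil; [ring| rewrite IH; ring]. Qed.

Lemma lsum_ext {T} l (h1 h2 : T -> R) : (forall x, In x l -> h1 x = h2 x) -> lsum l h1 = lsum l h2.
Proof. induction l as [|a l IH]; intros H; rewrite ?lsum_cons, ?lsum_nil; [ring|].
  rewrite H by (left; auto). rewrite IH by (intros; apply H; right; auto). ring. Qed.

Lemma lsum_plus {T} l (h1 h2 : T -> R) : lsum l (fun x => h1 x + h2 x) = lsum l h1 + lsum l h2.
Proof. induction l as [|a l IH]; rewrite ?lsum_cons, ?lsum_nil; [ring| rewrite IH; ring]. Qed.

Lemma lsum_minus {T} l (h1 h2 : T -> R) : lsum l (fun x => h1 x - h2 x) = lsum l h1 - lsum l h2.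
Proof. induction l as [|a l IH]; rewrite ?lsum_cons, ?lsum_nil; [ring| rewrite IH; ring]. Qed.

Lemma lsum_scal {T} l c (h : T -> R) : lsum l (fun x => c * h x) = c * lsum l h.
Proof. induction l as [|a l IH]; rewrite ?lsum_cons, ?lsum_nil; [ring| rewrite IH; ring]. Qed.

Lemma lsum_scal_r {T} l c (h : T -> R) : lsum l (fun x => h x * c) = lsum l h * c.
Proof. induction l as [|a l IH]; rewrite ?lsum_cons, ?lsum_nil; [ring| rewrite IH; ring]. Qed.

Lemma lsum_le {T} l (h1 h2 : T -> R) : (forall x, In x l -> h1 x <= h2 x) -> lsum l h1 <= lsum l h2.
Proof. induction l as [|a l IH]; intros H; rewrite ?lsum_cons, ?lsum_nil; [lra|].
  apply Rplus_le_compat; [apply H; left; auto| apply IH; intros; apply H; right; auto]. Qed.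

Lemma lsum_zero {T} l (h : T -> R) : (forall x, In x l -> h x = 0) -> lsum l h = 0.
Proof. intros H. rewrite (lsum_ext l h (fun _ => 0)) by auto.
  induction l; rewrite ?lsum_cons, ?lsum_nil; [ring| rewrite IHl; [ring| intros; apply H; right; auto]]. Qed.

Lemma lsum_nonneg {T} l (h : T -> R) : (forall x, In x l -> 0 <= h x) -> 0 <= lsum l h.
Proof. intros H. rewrite <- (lsum_zero l (fun _ => 0)) by auto. apply lsum_le; auto. Qed.

Lemma lsum_abs {T} l (h : T -> R) : Rabs (lsum l h) <= lsum l (fun x => Rabs (h x)).
Proof. induction l as [|a l IH]; rewrite ?lsum_cons, ?lsum_nil.
  - rewrite Rabs_R0; lra.
  - eapply Rle_trans; [apply Rabs_triang| lra]. Qed.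

Lemma lsum_swap {T U} (l1 : list T) (l2 : list U) h :
  lsum l1 (fun a => lsum l2 (fun b => h a b)) = lsum l2 (fun b => lsum l1 (fun a => h a b)).
Proof. induction l1 as [|a l1 IH]; rewrite ?lsum_cons, ?lsum_nil.
  - symmetry; apply lsum_zero; intros; reflexivity.
  - rewrite IH, <- lsum_plus. reflexivity. Qed.

Lemma lsum_flat_map {T U} (F : T -> list U) l h :
  lsum (flat_map F l) h = lsum l (fun x => lsum (F x) h).
Proof. induction l as [|a l IH]; simpl flat_map; rewrite ?lsum_cons, ?lsum_nil; [ring|].
  rewrite lsum_app, IH; ring. Qed.

Lemma lsum_perm {T} (l1 l2 : list T) h : Permutation l1 l2 -> lsum l1 h = lsum l2 h.
Proof. induction 1; rewrite ?lsum_cons, ?lsum_nil; try ring; try lra.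
  all: rewrite ?IHPermutation; try ring. Qed.

Lemma lsum_filter {T} (f : T -> bool) l h :
  lsum (filter f l) h = lsum l (fun x => if f x then h x else 0).
Proof. induction l as [|a l IH]; simpl filter; rewrite ?lsum_cons, ?lsum_nil; [ring|].
  destruct (f a); rewrite ?lsum_cons, IH; ring. Qed.

Lemma lsum_neg {T} l (h : T -> R) : (forall x, In x l -> h x <= 0) ->
  (exists x, In x l /\ h x < 0) -> lsum l h < 0.
Proof. induction l as [|a l IH]; intros H [x [Hx Hl]]; [destruct Hx|].
  rewrite lsum_cons. destruct Hx as [<-|Hx].
  - assert (lsum l h <= 0). { rewrite <- (lsum_zero l (fun _ => 0)) by auto. apply lsum_le; intros; apply H; right; auto. }
    lra.
  - assert (h a <= 0) by (apply H; left; auto).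
    assert (lsum l h < 0) by (apply IH; [intros; apply H; right; auto| exists x; auto]). lra. Qed.

Definition ind (P : Prop) : R := if excluded_middle_informative P then 1 else 0.

Lemma lsum_ind {T} (l : list T) z0 h : NoDup l -> In z0 l ->
  lsum l (fun z => ind (z = z0) * h z) = h z0.
Proof. induction l as [|a l IH]; intros Hn Hi; [destruct Hi|]. inversion Hn; subst.
  rewrite lsum_cons. unfold ind at 1. destruct (excluded_middle_informative (a = z0)).
  - subst. rewrite lsum_zero; [ring|]. intros z Hz. unfold ind.
    destruct (excluded_middle_informative (z = z0)); [subst; contradiction| ring].
  - destruct Hi as [->|Hi]; [congruence|]. rewrite IH by auto. ring. Qed.

Lemma lsum_ind0 {T} (l : list T) z0 h : ~ In z0 l ->
  lsum l (fun z => ind (z = z0) * h z) = 0.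
Proof. intros H; apply lsum_zero; intros z Hz; unfold ind.
  destruct (excluded_middle_informative (z = z0)); [subst; contradiction| ring]. Qed.

Lemma ind_and (P Q : Prop) : ind (P /\ Q) = ind P * ind Q.
Proof. unfold ind. destruct (excluded_middle_informative (P/\Q)), (excluded_middle_informative P), (excluded_middle_informative Q); try ring; tauto. Qed.

Lemma ind_T (P : Prop) : P -> ind P = 1.
Proof. unfold ind; destruct (excluded_middle_informative P); tauto. Qed.
Lemma ind_F (P : Prop) : ~P -> ind P = 0.
Proof. unfold ind; destruct (excluded_middle_informative P); tauto. Qed.

Lemma between {T} (U Lo : list T) (fu fl : T -> R) :
  (forall a b, In a Lo -> In b U -> fl a <= fu b) ->
  exists t, (forall b, In b U -> t <= fu b) /\ (forall a, In a Lo -> fl a <= t).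
Proof.
  induction U as [|b U IH]; intros H.
  - assert (exists m, forall a, In a Lo -> fl a <= m) as [m Hm].
    { clear H. induction Lo as [|a Lo IHL]; [exists 0; intros a []|].
      destruct IHL as [m Hm]. exists (Rmax (fl a) m). intros a' [<-|Ha].
      apply Rmax_l. eapply Rle_trans; [apply Hm; auto| apply Rmax_r]. }
    exists m; split; [intros b []|auto].
  - destruct IH as [t0 [H1 H2]]. { intros; apply H; simpl; auto. }
    exists (Rmin t0 (fu b)). split.
    + intros b' [<-|Hb]. apply Rmin_r. eapply Rle_trans; [apply Rmin_l| auto].
    + intros a Ha. apply Rmin_glb; auto. apply H; simpl; auto.
Qed.

Lemma ratio_le pv qv bp bq dp dq : 0 < pv -> qv < 0 ->
  -qv*dp + pv*dq <= -qv*bp + pv*bq -> (bq - dq)/qv <= (bp - dp)/pv.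
Proof.
  intros Hp Hq H. set (a := (bq - dq)/qv). set (b := (bp - dp)/pv).
  assert (bq - dq = a * qv) by (unfold a; field; lra).
  assert (bp - dp = b * pv) by (unfold b; field; lra).
  assert (0 <= pv * (-qv) * (b - a)) by nra.
  assert (0 < pv * (-qv)) by nra. nra.
Qed.


Definition feas {V} (vs : list V) (L : list ((V -> R) * R)) (x : V -> R) :=
  forall c, In c L -> lsum vs (fun w => fst c w * x w) <= snd c.

Definition comb {V} (v : V) (p q : (V -> R) * R) : (V -> R) * R :=
  (fun w => (- fst q v) * fst p w + fst p v * fst q w, (- fst q v) * snd p + fst p v * snd q).

Lemma farkas {V} (vs : list V) : NoDup vs -> forall L : list ((V -> R) * R),
  ~ (exists x, feas vs L x) ->
  exists y : (V -> R) * R -> R, (forall c, In c L -> 0 <= y c) /\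
    (forall w, In w vs -> lsum L (fun c => y c * fst c w) = 0) /\
    lsum L (fun c => y c * snd c) < 0.
Proof.
  induction vs as [|v vs IH]; intros Hnd L Hinf.
  - assert (exists c, In c L /\ snd c < 0) as [c0 [Hc0 Hneg]].
    { apply NNPP; intros Hn. apply Hinf. exists (fun _ => 0). intros c Hc.
      unfold lsum; simpl. apply Rnot_lt_le. intros Hl. apply Hn. exists c; auto. }
    exists (fun c => if Rlt_dec (snd c) 0 then 1 else 0). split; [|split].
    + intros c _. destruct (Rlt_dec (snd c) 0); lra.
    + intros w [].
    + apply lsum_neg.
      * intros c _. destruct (Rlt_dec (snd c) 0); [lra| lra].
      * exists c0; split; auto. destruct (Rlt_dec (snd c0) 0); lra.
  - inversion Hnd as [|? ? Hv Hnd']; subst.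
    set (isZ := fun c : (V -> R) * R => if Req_dec_T (fst c v) 0 then true else false).
    set (isP := fun c : (V -> R) * R => if Rlt_dec 0 (fst c v) then true else false).
    set (isN := fun c : (V -> R) * R => if Rlt_dec (fst c v) 0 then true else false).
    set (LZ := filter isZ L). set (LP := filter isP L). set (LN := filter isN L).
    set (L' := LZ ++ flat_map (fun p => map (fun q => comb v p q) LN) LP).
    destruct (IH Hnd' L') as [y' [Hy1 [Hy2 Hy3]]].
    { intros [x Hx]. apply Hinf.
      set (d := fun c : (V -> R) * R => lsum vs (fun w => fst c w * x w)).
      set (ub := fun c : (V -> R) * R => (snd c - d c) / fst c v).
      destruct (between LP LN ub ub) as [t [Ht1 Ht2]].
      { intros q p Hq Hp. unfold LN, LP in *. apply filter_In in Hq, Hp.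
        destruct Hq as [Hq Hq']; destruct Hp as [Hp Hp']. unfold isN, isP in *.
        destruct (Rlt_dec (fst q v) 0) as [Hqv|]; [|discriminate].
        destruct (Rlt_dec 0 (fst p v)) as [Hpv|]; [|discriminate].
        assert (Hin : In (comb v p q) L').
        { unfold L'. apply in_or_app; right. apply in_flat_map. exists p.
          split; [unfold LP; apply filter_In; unfold isP; destruct (Rlt_dec 0 (fst p v)); auto; lra|].
          apply in_map. unfold LN; apply filter_In; unfold isN; destruct (Rlt_dec (fst q v) 0); auto; lra. }
        specialize (Hx _ Hin). unfold comb in Hx; simpl in Hx.
        rewrite (lsum_ext _ _ (fun w => (- fst q v) * (fst p w * x w) + fst p v * (fst q w * x w))) in Hx
          by (intros; ring).
        rewrite lsum_plus, !lsum_scal in Hx.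
        apply ratio_le; auto. }
      exists (fun w => if excluded_middle_informative (w = v) then t else x w).
      intros c Hc. rewrite lsum_cons.
      destruct (excluded_middle_informative (v = v)) as [_|]; [|congruence].
      rewrite (lsum_ext vs _ (fun w => fst c w * x w)).
      2:{ intros w Hw. destruct (excluded_middle_informative (w = v)); [subst; contradiction| auto]. }
      fold (d c).
      destruct (total_order_T (fst c v) 0) as [[Hlt|Heq]|Hgt].
      + assert (Hin : In c LN) by (unfold LN; apply filter_In; unfold isN;
            destruct (Rlt_dec (fst c v) 0); auto; lra).
        specialize (Ht2 _ Hin). unfold ub in Ht2.
        apply Rmult_le_compat_r with (r := - fst c v) in Ht2; [|lra].
        replace ((snd c - d c) / fst c v * - fst c v) with (d c - snd c) in Ht2 by (field; lra).
        lra.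
      + assert (Hin : In c L') by (unfold L', LZ; apply in_or_app; left; apply filter_In;
          unfold isZ; destruct (Req_dec_T (fst c v) 0); auto).
        specialize (Hx _ Hin). fold (d c) in Hx. rewrite Heq; lra.
      + assert (Hin : In c LP) by (unfold LP; apply filter_In; unfold isP;
            destruct (Rlt_dec 0 (fst c v)); auto; lra).
        specialize (Ht1 _ Hin). unfold ub in Ht1.
        apply Rmult_le_compat_r with (r := fst c v) in Ht1; [|lra].
        replace ((snd c - d c) / fst c v * fst c v) with (snd c - d c) in Ht1 by (field; lra).
        lra. }
    set (y := fun c => (if isZ c then y' c else 0)
       + (if isP c then lsum LN (fun q => y' (comb v c q) * (- fst q v)) else 0)
       + (if isN c then lsum LP (fun p => y' (comb v p c) * fst p v) else 0)).
    assert (Key : forall F : (V -> R) * R -> R,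
      (forall p q, F (comb v p q) = (- fst q v) * F p + fst p v * F q) ->
      lsum L (fun c => y c * F c) = lsum L' (fun c => y' c * F c)).
    { intros F HF. unfold L'. rewrite lsum_app, lsum_flat_map.
      rewrite (lsum_ext L _ (fun c => (if isZ c then y' c * F c else 0) +
         (if isP c then lsum LN (fun q => y' (comb v c q) * (- fst q v)) * F c else 0) +
         (if isN c then lsum LP (fun p => y' (comb v p c) * fst p v) * F c else 0))).
      2:{ intros c _. unfold y. destruct (isZ c), (isP c), (isN c); ring. }
      rewrite !lsum_plus. unfold LZ, LP, LN. rewrite <- !lsum_filter.
      fold LN LP.
      rewrite (lsum_ext LP (fun x => lsum (map (fun q => comb v x q) LN) _)
        (fun p => lsum LN (fun q => y' (comb v p q) * (- fst q v)) * F p +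
                  lsum LN (fun q => y' (comb v p q) * fst p v * F q))).
      2:{ intros p _. rewrite lsum_map, <- lsum_scal_r, <- lsum_plus. apply lsum_ext.
          intros q _. rewrite HF. ring. }
      rewrite lsum_plus. rewrite (lsum_swap LP LN). ring_simplify.
      f_equal. apply lsum_ext. intros q _. rewrite <- lsum_scal_r. reflexivity. }
    assert (HL'v : forall c, In c L' -> fst c v = 0).
    { intros c Hc. unfold L' in Hc. apply in_app_or in Hc. destruct Hc as [Hc|Hc].
      - unfold LZ in Hc. apply filter_In in Hc. destruct Hc as [_ Hc]. unfold isZ in Hc.
        destruct (Req_dec_T (fst c v) 0); [auto| discriminate].
      - apply in_flat_map in Hc. destruct Hc as [p [_ Hc]]. apply in_map_iff in Hc.
        destruct Hc as [q [<- _]]. unfold comb; simpl. ring. }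
    exists y. split; [|split].
    + intros c Hc. unfold y.
      assert (H1 : 0 <= (if isZ c then y' c else 0)).
      { destruct (isZ c) eqn:E; [|lra]. apply Hy1. unfold L'; apply in_or_app; left.
        unfold LZ; apply filter_In; auto. }
      assert (H2 : 0 <= (if isP c then lsum LN (fun q => y' (comb v c q) * (- fst q v)) else 0)).
      { destruct (isP c) eqn:E; [|lra]. apply lsum_nonneg. intros q Hq.
        apply Rmult_le_pos.
        - apply Hy1. unfold L'; apply in_or_app; right. apply in_flat_map. exists c.
          split; [unfold LP; apply filter_In; auto| apply in_map; auto].
        - unfold LN in Hq; apply filter_In in Hq. destruct Hq as [_ Hq]. unfold isN in Hq.
          destruct (Rlt_dec (fst q v) 0); [lra| discriminate]. }
      assert (H3 : 0 <= (if isN c then lsum LP (fun p => y' (comb v p c) * fst p v) else 0)).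
      { destruct (isN c) eqn:E; [|lra]. apply lsum_nonneg. intros p Hp.
        apply Rmult_le_pos.
        - apply Hy1. unfold L'; apply in_or_app; right. apply in_flat_map. exists p.
          split; [auto| apply in_map; unfold LN; apply filter_In; auto].
        - unfold LP in Hp; apply filter_In in Hp. destruct Hp as [_ Hp]. unfold isP in Hp.
          destruct (Rlt_dec 0 (fst p v)); [lra| discriminate]. }
      lra.
    + intros w [Hwv|Hw].
      * subst w. rewrite (Key (fun c => fst c v)) by (intros; reflexivity).
        apply lsum_zero. intros c Hc. rewrite HL'v by auto. ring.
      * rewrite (Key (fun c => fst c w)) by (intros; reflexivity). apply Hy2; auto.
    + rewrite (Key snd) by (intros; reflexivity). auto.
Qed.


Definition cdec {T} (a b : T) : {a = b} + {a <> b} := excluded_middle_informative (a = b).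

Lemma supp_exact {T} (u : T -> R) : (exists s, fin_supp u s) ->
  exists S, NoDup S /\ forall x, In x S <-> u x <> 0.
Proof.
  intros [s [Hnd Hs]].
  exists (filter (fun x => if Req_dec_T (u x) 0 then false else true) s). split.
  - apply NoDup_filter; auto.
  - intros x. rewrite filter_In. destruct (Req_dec_T (u x) 0); split; intros H; try tauto.
    + destruct H; discriminate.
    + split; auto.
Qed.

Lemma lsum_supp {T} (u : T -> R) (h : T -> R) l S : NoDup l -> NoDup S ->
  (forall x, In x S <-> u x <> 0) -> (forall x, u x <> 0 -> In x l) ->
  lsum l (fun x => u x * h x) = lsum S (fun x => u x * h x).
Proof.
  intros Hl HS HSe Hsub.
  set (nz := fun x => if Req_dec_T (u x) 0 then false else true).
  rewrite (lsum_ext l _ (fun x => if nz x then u x * h x else 0)).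
  2:{ intros x _. unfold nz. destruct (Req_dec_T (u x) 0) as [e|]; [rewrite e; ring| auto]. }
  rewrite <- lsum_filter. apply lsum_perm. apply NoDup_Permutation.
  - apply NoDup_filter; auto.
  - auto.
  - intros x. rewrite filter_In, HSe. unfold nz. destruct (Req_dec_T (u x) 0); split; intros H; try tauto.
    + destruct H; discriminate.
    + split; auto.
Qed.

Lemma fsum_eq_lsum {T} (u : T -> R) (L : list T) h : NoDup L ->
  (forall x, u x <> 0 -> In x L) -> fsum u h = lsum L (fun x => u x * h x).
Proof.
  intros HL Hsub. unfold fsum.
  destruct (excluded_middle_informative (exists s, fin_supp u s)) as [H|H].
  2:{ exfalso; apply H; exists L; split; auto. }
  destruct (constructive_indefinite_description _ H) as [s [Hs1 Hs2]]. simpl.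
  change (lsum s (fun x => u x * h x) = lsum L (fun x => u x * h x)).
  destruct (supp_exact u H) as [S [HS HSe]].
  rewrite (lsum_supp u h s S), (lsum_supp u h L S); auto.
Qed.

Lemma fsum_ext {T} (u : T -> R) h1 h2 : (forall x, u x <> 0 -> h1 x = h2 x) ->
  fsum u h1 = fsum u h2.
Proof.
  intros H. unfold fsum. destruct (excluded_middle_informative _); [|reflexivity].
  change (lsum (proj1_sig (constructive_indefinite_description _ e)) (fun x => u x * h1 x) =
          lsum (proj1_sig (constructive_indefinite_description _ e)) (fun x => u x * h2 x)).
  apply lsum_ext. intros x _. destruct (Req_dec_T (u x) 0) as [E|E]; [rewrite E; ring| rewrite H; auto].
Qed.

Lemma supp_union {T I} (Il : list I) (mu : I -> T -> R) :
  (forall i, In i Il -> exists s, fin_supp (mu i) s) ->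
  exists L, NoDup L /\ forall i x, In i Il -> mu i x <> 0 -> In x L.
Proof.
  induction Il as [|i Il IH]; intros H.
  - exists []; split; [constructor| intros ? ? []].
  - destruct IH as [L [HL HL2]]; [intros; apply H; right; auto|].
    destruct (H i (or_introl eq_refl)) as [s [Hs1 Hs2]].
    exists (nodup cdec (s ++ L)). split; [apply NoDup_nodup|].
    intros j x [<-|Hj] Hx; apply nodup_In; apply in_or_app; [left; auto| right; eauto].
Qed.

Lemma fsum_comb {T I} (Il : list I) (c : I -> R) (mu : I -> T -> R) (m : T -> R) :
  (forall i, In i Il -> exists s, fin_supp (mu i) s) ->
  (forall x, m x = lsum Il (fun i => c i * mu i x)) ->
  (exists s, fin_supp m s) /\ forall f, fsum m f = lsum Il (fun i => c i * fsum (mu i) f).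
Proof.
  intros Hs Hm. destruct (supp_union Il mu Hs) as [L [HL HL2]].
  assert (Hsub : forall x, m x <> 0 -> In x L).
  { intros x Hx. apply NNPP; intros Hn. apply Hx. rewrite Hm. apply lsum_zero.
    intros i Hi. destruct (Req_dec_T (mu i x) 0) as [E|E]; [rewrite E; ring| exfalso; eauto]. }
  split; [exists L; split; auto|].
  intros f. rewrite (fsum_eq_lsum m L) by auto.
  rewrite (lsum_ext L _ (fun x => lsum Il (fun i => c i * (mu i x * f x)))).
  2:{ intros x _. rewrite Hm, <- lsum_scal_r. apply lsum_ext; intros; ring. }
  rewrite lsum_swap. apply lsum_ext. intros i Hi. rewrite lsum_scal. f_equal.
  symmetry; apply fsum_eq_lsum; auto. intros; eauto.
Qed.

Lemma fsum_hlin {T} (u : T -> R) h1 h2 a b : (exists s, fin_supp u s) ->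
  fsum u (fun x => a * h1 x + b * h2 x) = a * fsum u h1 + b * fsum u h2.
Proof.
  intros [s [H1 H2]]. rewrite !(fsum_eq_lsum u s) by auto.
  rewrite <- !lsum_scal, <- lsum_plus. apply lsum_ext; intros; ring.
Qed.

Lemma fsum_le {T} (u : T -> R) h1 h2 : (exists s, fin_supp u s) -> (forall x, 0 <= u x) ->
  (forall x, u x <> 0 -> h1 x <= h2 x) -> fsum u h1 <= fsum u h2.
Proof.
  intros [s [H1 H2]] Hp H. rewrite !(fsum_eq_lsum u s) by auto.
  apply lsum_le. intros x _. destruct (Req_dec_T (u x) 0) as [E|E]; [rewrite E; lra|].
  apply Rmult_le_compat_l; auto.
Qed.

Lemma fsum_abs {T} (u : T -> R) h : (exists s, fin_supp u s) -> (forall x, 0 <= u x) ->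
  Rabs (fsum u h) <= fsum u (fun x => Rabs (h x)).
Proof.
  intros [s [H1 H2]] Hp. rewrite !(fsum_eq_lsum u s) by auto.
  eapply Rle_trans; [apply lsum_abs|]. apply lsum_le. intros x _.
  rewrite Rabs_mult, (Rabs_right (u x)) by (apply Rle_ge; auto). lra.
Qed.

Lemma fsum_const {T} (u : T -> R) c : fsum u (fun _ => c) = c * fsum u (fun _ => 1).
Proof.
  unfold fsum. destruct (excluded_middle_informative _); [|ring].
  change (lsum (proj1_sig (constructive_indefinite_description _ e)) (fun x => u x * c) =
          c * lsum (proj1_sig (constructive_indefinite_description _ e)) (fun x => u x * 1)).
  rewrite <- lsum_scal. apply lsum_ext; intros; ring.
Qed.


Lemma fsum_mlin {T} (u1 u2 : T -> R) a b : (exists s, fin_supp u1 s) -> (exists s, fin_supp u2 s) ->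
  (exists s, fin_supp (fun x => a * u1 x + b * u2 x) s) /\
  forall h, fsum (fun x => a * u1 x + b * u2 x) h = a * fsum u1 h + b * fsum u2 h.
Proof.
  intros H1 H2.
  destruct (fsum_comb [true; false] (fun i : bool => if i then a else b)
     (fun i : bool => if i then u1 else u2) (fun x => a * u1 x + b * u2 x)) as [E F].
  - intros [|] _; auto.
  - intros x. rewrite !lsum_cons, lsum_nil. ring.
  - split; auto. intros h. rewrite F, !lsum_cons, lsum_nil. ring.
Qed.

Lemma part1 (X : point -> Prop) (A : Type) (q : point -> A -> point -> R) (g : point -> A -> R) :
  forall z z' l, inZ X z -> inZ X z' -> 0 <= l <= 1 ->
     forall w, Fhat X q g (combZ l z z') w <->
       exists w1 w2, Fhat X q g z w1 /\ Fhat X q g z' w2 /\ w = combZ l w1 w2.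
Proof.
  intros [u1 y1] [u2 y2] l [[Hu1p [Hu1X [Hu1s Hu11]]] _] [[Hu2p [Hu2X [Hu2s Hu21]]] _] Hl w.
  simpl in *.
  destruct (fsum_mlin u1 u2 l (1 - l) Hu1s Hu2s) as [_ Hlin].
  split.
  - intros [sig [Hsig ->]]. unfold combZ; simpl.
    exists (fun x' => fsum u1 (fun x => qext q x (sig x) x'), fsum u1 (fun x => gext g x (sig x))).
    exists (fun x' => fsum u2 (fun x => qext q x (sig x) x'), fsum u2 (fun x => gext g x (sig x))).
    split; [exists sig; split; auto|]. split; [exists sig; split; auto|].
    simpl. f_equal; [apply functional_extensionality; intros x'|]; apply Hlin.
  - intros [w1 [w2 [[s1 [Hs1 ->]] [[s2 [Hs2 ->]] ->]]]].
    set (u := fun x => l * u1 x + (1 - l) * u2 x).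
    assert (Hup : forall x, 0 <= u x).
    { intros x; unfold u. specialize (Hu1p x); specialize (Hu2p x). nra. }
    assert (HuX : forall x, u x <> 0 -> X x).
    { intros x Hx. destruct (Req_dec_T (u1 x) 0) as [E|E]; [|auto].
      apply Hu2X. intros E2. apply Hx. unfold u. rewrite E, E2; ring. }
    set (sig := fun x => if Req_dec_T (u x) 0 then s1 x else
                  fun a => (l * u1 x / u x) * s1 x a + ((1 - l) * u2 x / u x) * s2 x a).
    assert (Hpt : forall x (h : A -> R), u x <> 0 ->
      u x * fsum (sig x) h = l * u1 x * fsum (s1 x) h + (1 - l) * u2 x * fsum (s2 x) h).
    { intros x h Hx. unfold sig. destruct (Req_dec_T (u x) 0) as [|_]; [contradiction|].
      destruct (Hs1 x (HuX x Hx)) as [_ [_ [F1 _]]]. destruct (Hs2 x (HuX x Hx)) as [_ [_ [F2 _]]].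
      destruct (fsum_mlin (s1 x) (s2 x) (l * u1 x / u x) ((1 - l) * u2 x / u x) F1 F2) as [_ ->].
      field; auto. }
    assert (Hsum : forall h : point -> A -> R,
      fsum u (fun x => fsum (sig x) (h x)) =
      l * fsum u1 (fun x => fsum (s1 x) (h x)) + (1 - l) * fsum u2 (fun x => fsum (s2 x) (h x))).
    { intros h. destruct Hu1s as [t1 [Ht1 Ht1']]. destruct Hu2s as [t2 [Ht2 Ht2']].
      set (L := nodup cdec (t1 ++ t2)).
      assert (HL : NoDup L) by apply NoDup_nodup.
      assert (HL1 : forall x, u1 x <> 0 -> In x L) by (intros; apply nodup_In, in_or_app; auto).
      assert (HL2 : forall x, u2 x <> 0 -> In x L) by (intros; apply nodup_In, in_or_app; auto).
      assert (HLu : forall x, u x <> 0 -> In x L).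
      { intros x Hx. destruct (Req_dec_T (u1 x) 0) as [E|E]; [|auto]. apply HL2.
        intros E2; apply Hx; unfold u; rewrite E, E2; ring. }
      rewrite (fsum_eq_lsum u L), (fsum_eq_lsum u1 L), (fsum_eq_lsum u2 L) by auto.
      rewrite <- !lsum_scal, <- lsum_plus. apply lsum_ext. intros x _.
      destruct (Req_dec_T (u x) 0) as [E|E].
      + assert (l * u1 x = 0) by (specialize (Hu1p x); specialize (Hu2p x); unfold u in E; nra).
        assert ((1 - l) * u2 x = 0) by (specialize (Hu1p x); specialize (Hu2p x); unfold u in E; nra).
        rewrite E. transitivity (l * u1 x * fsum (s1 x) (h x) + (1 - l) * u2 x * fsum (s2 x) (h x));
          [rewrite H, H0; ring| ring].
      + rewrite Hpt by auto. ring. }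
    exists sig. split.
    + intros x Hx. unfold sig. destruct (Req_dec_T (u x) 0) as [E|E]; [auto|].
      assert (0 < u x) by (specialize (Hup x); lra).
      destruct (Hs1 x Hx) as [P1 [_ [F1 S1]]]. destruct (Hs2 x Hx) as [P2 [_ [F2 S2]]].
      destruct (fsum_mlin (s1 x) (s2 x) (l * u1 x / u x) ((1 - l) * u2 x / u x) F1 F2) as [Fs Hf].
      split; [|split; [auto|split; [auto|]]].
      * intros a. specialize (P1 a); specialize (P2 a). specialize (Hu1p x); specialize (Hu2p x).
        apply Rplus_le_le_0_compat; apply Rmult_le_pos; auto;
          unfold Rdiv; apply Rmult_le_pos; try apply Rmult_le_pos; try lra; left; apply Rinv_0_lt_compat; auto.
      * rewrite Hf, S1, S2. unfold u in *. field. auto.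
    + unfold combZ; simpl. f_equal.
      * apply functional_extensionality; intros x'. unfold qext.
        symmetry; apply (Hsum (fun x a => q x a x')).
      * unfold gext. symmetry; apply (Hsum g).
Qed.


Lemma norm1_lsum n z : norm1 n z = lsum (seq 0 n) (fun i => Rabs (z i)).
Proof. reflexivity. Qed.

Lemma sumK_lsum n h : sumK n h = lsum (seq 0 n) h.
Proof. reflexivity. Qed.

Lemma D1_bound n f x : D1 n f -> simplex n x -> -1 <= f x <= 1.
Proof.
  intros [_ Hf] Hx.
  assert (Hn : norm1 n x = 1).
  { destruct Hx as [H1 [_ H3]]. rewrite norm1_lsum. rewrite <- H3, sumK_lsum.
    apply lsum_ext. intros i Hi. apply in_seq in Hi. apply Rabs_right, Rle_ge, H1; lia. }
  assert (Hl : norm1 n (lincomb 1 x 0 x) = 1).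
  { transitivity (norm1 n x); [|auto]. unfold norm1, lincomb. rewrite !sumK_lsum. apply lsum_ext; intros; f_equal; ring. }
  assert (Hr : norm1 n (lincomb 0 x 1 x) = 1).
  { transitivity (norm1 n x); [|auto]. unfold norm1, lincomb. rewrite !sumK_lsum. apply lsum_ext; intros.
    rewrite <- Rabs_Ropp. f_equal; ring. }
  pose proof (Hf x x Hx Hx 1 0 ltac:(lra) ltac:(lra)).
  pose proof (Hf x x Hx Hx 0 1 ltac:(lra) ltac:(lra)). lra.
Qed.

Lemma fsum_dist_le (X : point -> Prop) (u : point -> R) h c : distf X u ->
  (forall x, X x -> h x <= c) -> fsum u h <= c.
Proof.
  intros [Hp [HX [Hs H1]]] Hh. rewrite <- (Rmult_1_r c), <- H1, <- fsum_const.
  apply fsum_le; auto.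
Qed.

Lemma D1_zero n : D1 n (fun _ => 0).
Proof.
  split.
  - intros x _ eps He. exists 1. split; [lra|]. intros. rewrite Rminus_0_r, Rabs_R0; auto.
  - intros. rewrite !Rmult_0_r, Rminus_0_r. unfold norm1. rewrite sumK_lsum.
    apply lsum_nonneg. intros; apply Rabs_pos.
Qed.

Lemma dstar_ok n X u v : (forall x, X x -> simplex n x) -> distf X u -> distf X v ->
  bound (dstar_set n u v) /\ exists t, dstar_set n u v t.
Proof.
  intros HX Hu Hv. split.
  - exists 2. intros t [f [Hf ->]].
    assert (fsum u f <= 1) by (apply (fsum_dist_le X); auto; intros; apply (D1_bound n); auto).
    assert (- fsum v f <= 1).
    { assert (fsum v (fun x => - f x) <= 1)
        by (apply (fsum_dist_le X); auto; intros x Hx; pose proof (D1_bound n f x Hf (HX x Hx)); lra).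
      destruct Hv as [_ [_ [Hs _]]].
      rewrite (fsum_ext v (fun x => - f x) (fun x => (-1) * f x + 0 * f x)) in H0 by (intros; ring).
      rewrite fsum_hlin in H0; auto. lra. }
    lra.
  - exists 0. exists (fun _ => 0). split; [apply D1_zero|].
    rewrite (fsum_const u), (fsum_const v). ring.
Qed.

Lemma dstar_ge n X u v f : (forall x, X x -> simplex n x) -> distf X u -> distf X v ->
  D1 n f -> fsum u f - fsum v f <= dstar n u v.
Proof.
  intros HX Hu Hv Hf. unfold dstar.
  destruct (excluded_middle_informative _) as [H|H].
  - destruct (completeness _ _ _) as [m [Hm1 Hm2]]. simpl. apply Hm1. exists f; auto.
  - exfalso. apply H. apply (dstar_ok n X); auto.
Qed.

Lemma dstar_le n a b D : (forall f, D1 n f -> fsum a f - fsum b f <= D) -> 0 <= D ->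
  dstar n a b <= D.
Proof.
  intros H HD. unfold dstar.
  destruct (excluded_middle_informative _) as [E|E]; [|auto].
  destruct (completeness _ _ _) as [m [Hm1 Hm2]]. simpl. apply Hm2.
  intros t [f [Hf ->]]. auto.
Qed.

Lemma dstar_nonneg n a b : 0 <= dstar n a b.
Proof.
  unfold dstar. destruct (excluded_middle_informative _) as [E|E]; [|lra].
  destruct (completeness _ _ _) as [m [Hm1 Hm2]]. simpl. apply Hm1.
  exists (fun _ => 0). split; [apply D1_zero|]. rewrite (fsum_const a), (fsum_const b). ring.
Qed.


Inductive V := VG (x y : point) | VH (x y : point) | VS (x y : point) (k : nat).

Definition Vfst (w : V) := match w with VG x _ | VH x _ | VS x _ _ => x end.
Definition Vsnd (w : V) := match w with VG _ y | VH _ y | VS _ y _ => y end.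

Definition blockV (x y : point) (K : list nat) : list V := VG x y :: VH x y :: map (VS x y) K.
Definition vsOf S T K := flat_map (fun x => flat_map (fun y => blockV x y K) T) S.

Lemma NoDup_flat_map_key {X Y} (key : Y -> X) (F : X -> list Y) l :
  NoDup l -> (forall x, In x l -> NoDup (F x)) ->
  (forall x e, In x l -> In e (F x) -> key e = x) -> NoDup (flat_map F l).
Proof.
  induction l as [|a l IH]; simpl; intros Hn HF Hk; [constructor|]. inversion Hn; subst.
  apply NoDup_app; auto.
  intros e He1 He2. apply in_flat_map in He2. destruct He2 as [x' [Hx' He']].
  assert (key e = a) by auto. assert (key e = x') by auto. subst. congruence.
Qed.

Lemma vs_nodup S T K : NoDup S -> NoDup T -> NoDup K -> NoDup (vsOf S T K).
Proof.
  intros HS HT HK. apply (NoDup_flat_map_key Vfst); auto.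
  - intros x _. apply (NoDup_flat_map_key Vsnd); auto.
    + intros y _. unfold blockV. constructor; [simpl; intros [H|H]; [discriminate|];
        apply in_map_iff in H; destruct H as [? [H _]]; discriminate|].
      constructor; [intros H; apply in_map_iff in H; destruct H as [? [H _]]; discriminate|].
      apply FinFun.Injective_map_NoDup; auto. intros a b H; injection H; auto.
    + intros y e _ He. unfold blockV in He. destruct He as [<-|[<-|He]]; auto.
      apply in_map_iff in He. destruct He as [k [<- _]]; auto.
  - intros x e _ He. apply in_flat_map in He. destruct He as [y [_ He]].
    unfold blockV in He. destruct He as [<-|[<-|He]]; auto.
    apply in_map_iff in He. destruct He as [k [<- _]]; auto.
Qed.

Lemma in_vs_G S T K x y : In x S -> In y T -> In (VG x y) (vsOf S T K).
Proof. intros. apply in_flat_map. exists x; split; auto. apply in_flat_map. exists y; split; auto. left; auto. Qed.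
Lemma in_vs_H S T K x y : In x S -> In y T -> In (VH x y) (vsOf S T K).
Proof. intros. apply in_flat_map. exists x; split; auto. apply in_flat_map. exists y; split; auto. right; left; auto. Qed.
Lemma in_vs_S S T K x y k : In x S -> In y T -> In k K -> In (VS x y k) (vsOf S T K).
Proof. intros. apply in_flat_map. exists x; split; auto. apply in_flat_map. exists y; split; auto.
  right; right; apply in_map; auto. Qed.

Lemma lsum_vs S T K h : lsum (vsOf S T K) h =
  lsum S (fun x => lsum T (fun y => h (VG x y) + (h (VH x y) + lsum K (fun k => h (VS x y k))))).
Proof.
  unfold vsOf. rewrite lsum_flat_map. apply lsum_ext; intros x _.
  rewrite lsum_flat_map. apply lsum_ext; intros y _. unfold blockV.
  rewrite !lsum_cons, lsum_map. reflexivity.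
Qed.

Definition cs := ((V -> R) * R)%type.
Definition C1 x y : cs := (fun w => - ind (w = VG x y), 0).
Definition C2 x y : cs := (fun w => - ind (w = VH x y), 0).
Definition C3 (T : list point) (u : point -> R) x : cs := (fun w => lsum T (fun y => ind (w = VG x y)), u x).
Definition C4 (T : list point) (u : point -> R) x : cs := (fun w => - lsum T (fun y => ind (w = VG x y)), - u x).
Definition C5 (S : list point) (v : point -> R) y : cs := (fun w => lsum S (fun x => ind (w = VH x y)), v y).
Definition C6 (S : list point) (v : point -> R) y : cs := (fun w => - lsum S (fun x => ind (w = VH x y)), - v y).
Definition C7 (x y : point) k : cs :=
  (fun w => ind (w = VG x y) * x k - ind (w = VH x y) * y k - ind (w = VS x y k), 0).
Definition C8 (x y : point) k : cs :=
  (fun w => - ind (w = VG x y) * x k + ind (w = VH x y) * y k - ind (w = VS x y k), 0).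
Definition C9 S T K D : cs :=
  (fun w => lsum S (fun x => lsum T (fun y => lsum K (fun k => ind (w = VS x y k)))), D).

Definition cstrs S T K (u v : point -> R) D : list cs :=
  flat_map (fun x => flat_map (fun y => [C1 x y; C2 x y] ++ map (C7 x y) K ++ map (C8 x y) K) T) S
  ++ flat_map (fun x => [C3 T u x; C4 T u x]) S
  ++ flat_map (fun y => [C5 S v y; C6 S v y]) T ++ [C9 S T K D].

Lemma lsum_cstrs S T K u v D h : lsum (cstrs S T K u v D) h =
  lsum S (fun x => lsum T (fun y => h (C1 x y) + h (C2 x y) +
     (lsum K (fun k => h (C7 x y k)) + lsum K (fun k => h (C8 x y k)))))
  + lsum S (fun x => h (C3 T u x) + h (C4 T u x))
  + lsum T (fun y => h (C5 S v y) + h (C6 S v y)) + h (C9 S T K D).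
Proof.
  unfold cstrs. rewrite !lsum_app, !lsum_flat_map.
  rewrite lsum_cons, lsum_nil.
  rewrite (lsum_ext S (fun x => lsum (flat_map _ T) h)
     (fun x => lsum T (fun y => h (C1 x y) + h (C2 x y) +
     (lsum K (fun k => h (C7 x y k)) + lsum K (fun k => h (C8 x y k)))))).
  2:{ intros x _. rewrite lsum_flat_map. apply lsum_ext. intros y _.
      rewrite !lsum_app, !lsum_map, !lsum_cons, lsum_nil. ring. }
  rewrite (lsum_ext S (fun x => lsum [C3 T u x; C4 T u x] h) (fun x => h (C3 T u x) + h (C4 T u x)))
    by (intros; rewrite !lsum_cons, lsum_nil; ring).
  rewrite (lsum_ext T (fun y => lsum [C5 S v y; C6 S v y] h) (fun y => h (C5 S v y) + h (C6 S v y)))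
    by (intros; rewrite !lsum_cons, lsum_nil; ring).
  ring.
Qed.

Definition dot (vs : list V) (a X : V -> R) := lsum vs (fun w => a w * X w).


Lemma dot_ind vs v0 (X : V -> R) : NoDup vs -> In v0 vs -> lsum vs (fun w => ind (w = v0) * X w) = X v0.
Proof. intros; apply lsum_ind; auto. Qed.


Lemma ev1 S T K x y (X : V -> R) : NoDup S -> NoDup T -> NoDup K -> In x S -> In y T ->
  dot (vsOf S T K) (fst (C1 x y)) X = - X (VG x y).
Proof.
  intros. unfold dot, C1; simpl.
  rewrite (lsum_ext _ _ (fun w => (-1) * (ind (w = VG x y) * X w))) by (intros; ring).
  rewrite lsum_scal, dot_ind; [ring| apply vs_nodup; auto| apply in_vs_G; auto].
Qed.

Lemma ev2 S T K x y (X : V -> R) : NoDup S -> NoDup T -> NoDup K -> In x S -> In y T ->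
  dot (vsOf S T K) (fst (C2 x y)) X = - X (VH x y).
Proof.
  intros. unfold dot, C2; simpl.
  rewrite (lsum_ext _ _ (fun w => (-1) * (ind (w = VH x y) * X w))) by (intros; ring).
  rewrite lsum_scal, dot_ind; [ring| apply vs_nodup; auto| apply in_vs_H; auto].
Qed.

Lemma ev3 S T K u x (X : V -> R) : NoDup S -> NoDup T -> NoDup K -> In x S ->
  dot (vsOf S T K) (fst (C3 T u x)) X = lsum T (fun y => X (VG x y)).
Proof.
  intros. unfold dot, C3; simpl.
  rewrite (lsum_ext _ _ (fun w => lsum T (fun y => ind (w = VG x y) * X w))) by (intros; rewrite lsum_scal_r; ring).
  rewrite lsum_swap. apply lsum_ext. intros y Hy. apply dot_ind; [apply vs_nodup; auto| apply in_vs_G; auto].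
Qed.

Lemma ev4 S T K u x (X : V -> R) : NoDup S -> NoDup T -> NoDup K -> In x S ->
  dot (vsOf S T K) (fst (C4 T u x)) X = - lsum T (fun y => X (VG x y)).
Proof.
  intros. rewrite <- (ev3 S T K u x X) by auto. unfold dot, C3, C4; simpl.
  rewrite <- (Rmult_1_l (lsum _ (fun w => lsum T _ * X w))), Ropp_mult_distr_l, <- lsum_scal.
  apply lsum_ext; intros; ring.
Qed.

Lemma ev5 S T K v y (X : V -> R) : NoDup S -> NoDup T -> NoDup K -> In y T ->
  dot (vsOf S T K) (fst (C5 S v y)) X = lsum S (fun x => X (VH x y)).
Proof.
  intros. unfold dot, C5; simpl.
  rewrite (lsum_ext _ _ (fun w => lsum S (fun x => ind (w = VH x y) * X w))) by (intros; rewrite lsum_scal_r; ring).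
  rewrite lsum_swap. apply lsum_ext. intros x Hx. apply dot_ind; [apply vs_nodup; auto| apply in_vs_H; auto].
Qed.

Lemma ev6 S T K v y (X : V -> R) : NoDup S -> NoDup T -> NoDup K -> In y T ->
  dot (vsOf S T K) (fst (C6 S v y)) X = - lsum S (fun x => X (VH x y)).
Proof.
  intros. rewrite <- (ev5 S T K v y X) by auto. unfold dot, C5, C6; simpl.
  rewrite <- (Rmult_1_l (lsum _ (fun w => lsum S _ * X w))), Ropp_mult_distr_l, <- lsum_scal.
  apply lsum_ext; intros; ring.
Qed.

Lemma ev7 S T K x y k (X : V -> R) : NoDup S -> NoDup T -> NoDup K -> In x S -> In y T -> In k K ->
  dot (vsOf S T K) (fst (C7 x y k)) X = X (VG x y) * x k - X (VH x y) * y k - X (VS x y k).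
Proof.
  intros. unfold dot, C7; simpl.
  rewrite (lsum_ext _ _ (fun w => x k * (ind (w = VG x y) * X w) - y k * (ind (w = VH x y) * X w)
     - ind (w = VS x y k) * X w)) by (intros; ring).
  rewrite !lsum_minus, !lsum_scal, !dot_ind; auto using vs_nodup, in_vs_G, in_vs_H, in_vs_S. ring.
Qed.

Lemma ev8 S T K x y k (X : V -> R) : NoDup S -> NoDup T -> NoDup K -> In x S -> In y T -> In k K ->
  dot (vsOf S T K) (fst (C8 x y k)) X = - X (VG x y) * x k + X (VH x y) * y k - X (VS x y k).
Proof.
  intros. unfold dot, C8; simpl.
  rewrite (lsum_ext _ _ (fun w => y k * (ind (w = VH x y) * X w) - x k * (ind (w = VG x y) * X w)
     - ind (w = VS x y k) * X w)) by (intros; ring).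
  rewrite !lsum_minus, !lsum_scal, !dot_ind; auto using vs_nodup, in_vs_G, in_vs_H, in_vs_S. ring.
Qed.

Lemma ev9 S T K D (X : V -> R) : NoDup S -> NoDup T -> NoDup K ->
  dot (vsOf S T K) (fst (C9 S T K D)) X = lsum S (fun x => lsum T (fun y => lsum K (fun k => X (VS x y k)))).
Proof.
  intros. unfold dot, C9; simpl.
  rewrite (lsum_ext _ _ (fun w => lsum S (fun x => lsum T (fun y => lsum K (fun k => ind (w = VS x y k) * X w))))).
  2:{ intros w _. rewrite <- lsum_scal_r. apply lsum_ext; intros. rewrite <- lsum_scal_r.
      apply lsum_ext; intros. rewrite <- lsum_scal_r. reflexivity. }
  rewrite lsum_swap. apply lsum_ext; intros x Hx. rewrite lsum_swap. apply lsum_ext; intros y Hy.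
  rewrite lsum_swap. apply lsum_ext; intros k Hk. apply dot_ind; auto using vs_nodup, in_vs_S.
Qed.


Definition AG (T : list point) (K : list nat) (u : point -> R) (y : cs -> R) (x z : point) :=
  - y (C1 x z) + (y (C3 T u x) - y (C4 T u x)) + lsum K (fun k => (y (C7 x z k) - y (C8 x z k)) * x k).
Definition AH (S : list point) (K : list nat) (v : point -> R) (y : cs -> R) (x z : point) :=
  - y (C2 x z) + (y (C5 S v z) - y (C6 S v z)) - lsum K (fun k => (y (C7 x z k) - y (C8 x z k)) * z k).
Definition AS (S T : list point) (K : list nat) (D : R) (y : cs -> R) (x z : point) (k : nat) :=
  - y (C7 x z k) - y (C8 x z k) + y (C9 S T K D).

Lemma lag S T K u v D (y : cs -> R) (X : V -> R) : NoDup S -> NoDup T -> NoDup K ->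
  lsum (cstrs S T K u v D) (fun c => y c * dot (vsOf S T K) (fst c) X) =
  lsum S (fun x => lsum T (fun z => X (VG x z) * AG T K u y x z +
     (X (VH x z) * AH S K v y x z + lsum K (fun k => X (VS x z k) * AS S T K D y x z k)))).
Proof.
  intros HS HT HK. rewrite lsum_cstrs.
  rewrite ev9 by auto.
  rewrite (lsum_ext S (fun x => y (C3 T u x) * _ + y (C4 T u x) * _)
     (fun x => lsum T (fun z => (y (C3 T u x) - y (C4 T u x)) * X (VG x z)))).
  2:{ intros x Hx. rewrite ev3, ev4 by auto. rewrite lsum_scal. ring. }
  rewrite (lsum_ext T (fun z => y (C5 S v z) * _ + y (C6 S v z) * _)
     (fun z => lsum S (fun x => (y (C5 S v z) - y (C6 S v z)) * X (VH x z)))).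
  2:{ intros z Hz. rewrite ev5, ev6 by auto. rewrite lsum_scal. ring. }
  rewrite (lsum_swap T S).
  rewrite <- (lsum_scal S (y (C9 S T K D))).
  rewrite <- !lsum_plus. apply lsum_ext. intros x Hx.
  rewrite <- lsum_scal.
  rewrite <- !lsum_plus. apply lsum_ext. intros z Hz.
  rewrite ev1, ev2 by auto.
  rewrite (lsum_ext K (fun k => y (C7 x z k) * _)
     (fun k => y (C7 x z k) * (X (VG x z) * x k - X (VH x z) * z k - X (VS x z k))))
     by (intros; rewrite ev7; auto).
  rewrite (lsum_ext K (fun k => y (C8 x z k) * _)
     (fun k => y (C8 x z k) * (- X (VG x z) * x k + X (VH x z) * z k - X (VS x z k))))
     by (intros; rewrite ev8; auto).
  rewrite <- lsum_scal.
  unfold AG, AH, AS.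
  set (Xg := X (VG x z)). set (Xh := X (VH x z)).
  assert (E1 : lsum K (fun k => y (C7 x z k) * (Xg * x k - Xh * z k - X (VS x z k))) +
     lsum K (fun k => y (C8 x z k) * (- Xg * x k + Xh * z k - X (VS x z k))) +
     lsum K (fun k => y (C9 S T K D) * X (VS x z k)) =
     Xg * lsum K (fun k => (y (C7 x z k) - y (C8 x z k)) * x k)
     - Xh * lsum K (fun k => (y (C7 x z k) - y (C8 x z k)) * z k)
     + lsum K (fun k => X (VS x z k) * (- y (C7 x z k) - y (C8 x z k) + y (C9 S T K D)))).
  { rewrite <- !lsum_scal, <- !lsum_plus, <- lsum_minus, <- lsum_plus. apply lsum_ext; intros; ring. }
  lra.
Qed.


Definition listmax (l : list R) : R := match l with [] => 0 | a :: l' => fold_right Rmax a l' end.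
Definition listmin (l : list R) : R := match l with [] => 0 | a :: l' => fold_right Rmin a l' end.

Lemma listmax_ge l b : In b l -> b <= listmax l.
Proof.
  destruct l as [|a l]; [intros []|]. simpl listmax.
  assert (H : a <= fold_right Rmax a l /\ forall c, In c l -> c <= fold_right Rmax a l).
  { induction l as [|c l IH]; simpl; [split; [lra| intros _ []]|].
    destruct IH as [IH1 IH2]. split.
    - eapply Rle_trans; [apply IH1| apply Rmax_r].
    - intros d [<-|Hd]; [apply Rmax_l| eapply Rle_trans; [apply IH2; auto| apply Rmax_r]]. }
  intros [<-|Hb]; [apply (proj1 H)| apply (proj2 H); auto].
Qed.

Lemma listmax_in l : l <> [] -> In (listmax l) l.
Proof.
  destruct l as [|a l]; [congruence|]. intros _. simpl listmax.
  assert (H : fold_right Rmax a l = a \/ In (fold_right Rmax a l) l).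
  { induction l as [|c l IH]; simpl; [auto|].
    destruct (Rle_dec c (fold_right Rmax a l)).
    - rewrite Rmax_right by auto. destruct IH; auto.
    - rewrite Rmax_left by lra. auto. }
  destruct H as [H|H]; [rewrite H; left; auto| right; auto].
Qed.

Lemma listmin_le l b : In b l -> listmin l <= b.
Proof.
  destruct l as [|a l]; [intros []|]. simpl listmin.
  assert (H : fold_right Rmin a l <= a /\ forall c, In c l -> fold_right Rmin a l <= c).
  { induction l as [|c l IH]; simpl; [split; [lra| intros _ []]|].
    destruct IH as [IH1 IH2]. split.
    - eapply Rle_trans; [apply Rmin_r| apply IH1].
    - intros d [<-|Hd]; [apply Rmin_l| eapply Rle_trans; [apply Rmin_r| apply IH2; auto]]. }
  intros [<-|Hb]; [apply (proj1 H)| apply (proj2 H); auto].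
Qed.

Lemma listmin_in l : l <> [] -> In (listmin l) l.
Proof.
  destruct l as [|a l]; [congruence|]. intros _. simpl listmin.
  assert (H : fold_right Rmin a l = a \/ In (fold_right Rmin a l) l).
  { induction l as [|c l IH]; simpl; [auto|].
    destruct (Rle_dec c (fold_right Rmin a l)).
    - rewrite Rmin_left by auto. auto.
    - rewrite Rmin_right by lra. destruct IH; auto. }
  destruct H as [H|H]; [rewrite H; left; auto| right; auto].
Qed.

Definition linw (n : nat) (w : point -> point -> nat -> R) x z (p : point) : R :=
  lsum (seq 0 n) (fun k => w x z k * p k).
Definition Phi n S T w (p : point) : R :=
  listmax (map (fun x => listmin (map (fun z => linw n w x z p) T)) S).

Lemma Phi_lower n S T w x0 c p : In x0 S -> (forall z, In z T -> c <= linw n w x0 z p) ->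
  T <> [] -> c <= Phi n S T w p.
Proof.
  intros Hx Hc HT. unfold Phi. eapply Rle_trans; [|apply listmax_ge; apply in_map; exact Hx].
  assert (Hin := listmin_in (map (fun z => linw n w x0 z p) T)).
  destruct T; [congruence|]. specialize (Hin ltac:(discriminate)).
  apply in_map_iff in Hin. destruct Hin as [z [<- Hz]]. auto.
Qed.

Lemma Phi_upper n S T w z0 c p : In z0 T -> (forall x, In x S -> linw n w x z0 p <= c) ->
  S <> [] -> Phi n S T w p <= c.
Proof.
  intros Hz Hc HS. unfold Phi.
  assert (Hin := listmax_in (map (fun x => listmin (map (fun z => linw n w x z p) T)) S)).
  destruct S; [congruence|]. specialize (Hin ltac:(discriminate)).
  apply in_map_iff in Hin. destruct Hin as [x [Hx Hx']]. rewrite <- Hx.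
  eapply Rle_trans; [apply listmin_le; apply in_map; exact Hz| auto].
Qed.

Lemma Phi_lip n S T w p p' a b : S <> [] -> T <> [] ->
  (forall x z k, In x S -> In z T -> In k (seq 0 n) -> Rabs (w x z k) <= 1) -> 0 <= a -> 0 <= b ->
  a * Phi n S T w p - b * Phi n S T w p' <= norm1 n (lincomb a p b p').
Proof.
  intros HS HT Hw Ha Hb.
  assert (Hin := listmax_in (map (fun x => listmin (map (fun z => linw n w x z p) T)) S)).
  destruct S as [|s0 S']; [congruence|]. specialize (Hin ltac:(discriminate)).
  apply in_map_iff in Hin. destruct Hin as [x [Hx HxS]].
  assert (Hin2 := listmin_in (map (fun z => linw n w x z p') T)).
  destruct T as [|t0 T']; [congruence|]. specialize (Hin2 ltac:(discriminate)).
  apply in_map_iff in Hin2. destruct Hin2 as [z [Hz HzT]].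
  set (S := s0 :: S') in *. set (T := t0 :: T') in *.
  assert (H1 : Phi n S T w p <= linw n w x z p).
  { unfold Phi. rewrite <- Hx. apply listmin_le. apply (in_map (fun z0 => linw n w x z0 p)); auto. }
  assert (H2 : linw n w x z p' <= Phi n S T w p').
  { unfold Phi. rewrite Hz. apply listmax_ge.
    apply in_map_iff. exists x; split; auto. }
  assert (a * Phi n S T w p - b * Phi n S T w p' <= a * linw n w x z p - b * linw n w x z p').
  { apply Rplus_le_compat; [apply Rmult_le_compat_l; auto| apply Ropp_le_contravar, Rmult_le_compat_l; auto]. }
  eapply Rle_trans; [apply H|]. unfold linw. rewrite <- !lsum_scal, <- lsum_minus.
  rewrite norm1_lsum. apply lsum_le. intros k Hk. unfold lincomb.
  replace (a * (w x z k * p k) - b * (w x z k * p' k)) with (w x z k * (a * p k - b * p' k)) by ring.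
  eapply Rle_trans; [apply Rle_abs|]. rewrite Rabs_mult.
  rewrite <- (Rmult_1_l (Rabs (a * p k - b * p' k))) at 2.
  apply Rmult_le_compat_r; [apply Rabs_pos| apply Hw; auto].
Qed.

Lemma Phi_D1 n S T w : S <> [] -> T <> [] ->
  (forall x z k, In x S -> In z T -> In k (seq 0 n) -> Rabs (w x z k) <= 1) -> D1 n (Phi n S T w).
Proof.
  intros HS HT Hw. split.
  - intros x _ eps He. exists eps. split; auto. intros y _ Hy.
    apply Rabs_def1.
    + pose proof (Phi_lip n S T w x y 1 1 HS HT Hw ltac:(lra) ltac:(lra)). lra.
    + pose proof (Phi_lip n S T w y x 1 1 HS HT Hw ltac:(lra) ltac:(lra)).
      assert (norm1 n (lincomb 1 y 1 x) = norm1 n (lincomb 1 x 1 y)).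
      { rewrite !norm1_lsum. apply lsum_ext. intros. unfold lincomb. apply Rabs_minus_sym. }
      lra.
  - intros x y _ _ a b Ha Hb. apply Phi_lip; auto.
Qed.



Lemma in_blk S T K u v D x z c : In x S -> In z T ->
  In c ([C1 x z; C2 x z] ++ map (C7 x z) K ++ map (C8 x z) K) -> In c (cstrs S T K u v D).
Proof.
  intros Hx Hz Hc. unfold cstrs. apply in_or_app; left. apply in_flat_map. exists x; split; auto.
  apply in_flat_map. exists z; split; auto.
Qed.

Lemma in_c1 S T K u v D x z : In x S -> In z T -> In (C1 x z) (cstrs S T K u v D).
Proof. intros; apply in_blk with x z; simpl; auto. Qed.
Lemma in_c2 S T K u v D x z : In x S -> In z T -> In (C2 x z) (cstrs S T K u v D).
Proof. intros; apply in_blk with x z; simpl; auto. Qed.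
Lemma in_c7 S T K u v D x z k : In x S -> In z T -> In k K -> In (C7 x z k) (cstrs S T K u v D).
Proof. intros; apply in_blk with x z; auto. apply in_or_app; right; apply in_or_app; left; apply in_map; auto. Qed.
Lemma in_c8 S T K u v D x z k : In x S -> In z T -> In k K -> In (C8 x z k) (cstrs S T K u v D).
Proof. intros; apply in_blk with x z; auto. apply in_or_app; right; apply in_or_app; right; apply in_map; auto. Qed.
Lemma in_c3 S T K u v D x : In x S -> In (C3 T u x) (cstrs S T K u v D).
Proof. intros. unfold cstrs. apply in_or_app; right. apply in_or_app; left.
  apply in_flat_map. exists x; simpl; auto. Qed.
Lemma in_c4 S T K u v D x : In x S -> In (C4 T u x) (cstrs S T K u v D).
Proof. intros. unfold cstrs. apply in_or_app; right. apply in_or_app; left.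
  apply in_flat_map. exists x; simpl; auto. Qed.
Lemma in_c5 S T K u v D z : In z T -> In (C5 S v z) (cstrs S T K u v D).
Proof. intros. unfold cstrs. apply in_or_app; right. apply in_or_app; right. apply in_or_app; left.
  apply in_flat_map. exists z; simpl; auto. Qed.
Lemma in_c6 S T K u v D z : In z T -> In (C6 S v z) (cstrs S T K u v D).
Proof. intros. unfold cstrs. apply in_or_app; right. apply in_or_app; right. apply in_or_app; left.
  apply in_flat_map. exists z; simpl; auto. Qed.
Lemma in_c9 S T K u v D : In (C9 S T K D) (cstrs S T K u v D).
Proof. unfold cstrs. apply in_or_app; right. apply in_or_app; right. apply in_or_app; right. left; auto. Qed.

Lemma rhs_cstrs S T K u v D (y : cs -> R) :
  lsum (cstrs S T K u v D) (fun c => y c * snd c) =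
  lsum S (fun x => (y (C3 T u x) - y (C4 T u x)) * u x) +
  lsum T (fun z => (y (C5 S v z) - y (C6 S v z)) * v z) + y (C9 S T K D) * D.
Proof.
  rewrite lsum_cstrs. simpl.
  rewrite (lsum_zero S); [|intros x _; apply lsum_zero; intros z _; rewrite !lsum_zero; [ring| |];
     intros; simpl; ring].
  rewrite (lsum_ext S _ (fun x => (y (C3 T u x) - y (C4 T u x)) * u x)) by (intros; ring).
  rewrite (lsum_ext T _ (fun z => (y (C5 S v z) - y (C6 S v z)) * v z)) by (intros; ring).
  ring.
Qed.

Lemma plan_exists n (X : point -> Prop) (u v : point -> R) S T :
  (forall x, X x -> simplex n x) -> distf X u -> distf X v ->
  NoDup S -> (forall x, In x S <-> u x <> 0) -> NoDup T -> (forall x, In x T <-> v x <> 0) ->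
  exists gam gam' : point -> point -> R,
    (forall x z, In x S -> In z T -> 0 <= gam x z /\ 0 <= gam' x z) /\
    (forall x, In x S -> lsum T (fun z => gam x z) = u x) /\
    (forall z, In z T -> lsum S (fun x => gam' x z) = v z) /\
    lsum S (fun x => lsum T (fun z => norm1 n (lincomb (gam x z) x (gam' x z) z))) <= dstar n u v.
Proof.
  intros HX Hu Hv HS HSe HT HTe.
  set (K := seq 0 n). assert (HK : NoDup K) by apply seq_NoDup.
  set (D := dstar n u v).
  apply NNPP. intros Hno.
  destruct (farkas (vsOf S T K) (vs_nodup S T K HS HT HK) (cstrs S T K u v D)) as [yc [Hy1 [Hy2 Hy3]]].
  { intros [Xv Hf]. apply Hno.
    exists (fun x z => Xv (VG x z)), (fun x z => Xv (VH x z)).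
    assert (F : forall c, In c (cstrs S T K u v D) -> dot (vsOf S T K) (fst c) Xv <= snd c) by exact Hf.
    split; [|split; [|split]].
    - intros x z Hx Hz. split.
      + pose proof (F _ (in_c1 S T K u v D x z Hx Hz)). rewrite ev1 in H by auto. simpl in H. lra.
      + pose proof (F _ (in_c2 S T K u v D x z Hx Hz)). rewrite ev2 in H by auto. simpl in H. lra.
    - intros x Hx.
      pose proof (F _ (in_c3 S T K u v D x Hx)). rewrite ev3 in H by auto.
      pose proof (F _ (in_c4 S T K u v D x Hx)). rewrite ev4 in H0 by auto. simpl in *. lra.
    - intros z Hz.
      pose proof (F _ (in_c5 S T K u v D z Hz)). rewrite ev5 in H by auto.
      pose proof (F _ (in_c6 S T K u v D z Hz)). rewrite ev6 in H0 by auto. simpl in *. lra.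
    - pose proof (F _ (in_c9 S T K u v D)). rewrite ev9 in H by auto. simpl in H.
      eapply Rle_trans; [|exact H]. apply lsum_le; intros x Hx. apply lsum_le; intros z Hz.
      rewrite norm1_lsum. apply lsum_le. intros k Hk. unfold lincomb.
      pose proof (F _ (in_c7 S T K u v D x z k Hx Hz Hk)). rewrite ev7 in H0 by auto.
      pose proof (F _ (in_c8 S T K u v D x z k Hx Hz Hk)). rewrite ev8 in H1 by auto.
      simpl in *. apply Rabs_le. split; lra. }
  set (L := cstrs S T K u v D) in *.
  assert (Lag0 : forall Xv : V -> R, lsum L (fun c => yc c * dot (vsOf S T K) (fst c) Xv) = 0).
  { intros Xv. unfold dot.
    rewrite (lsum_ext L _ (fun c => lsum (vsOf S T K) (fun w => yc c * fst c w * Xv w)))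
      by (intros; rewrite <- lsum_scal; apply lsum_ext; intros; ring).
    rewrite lsum_swap. apply lsum_zero. intros w Hw. rewrite lsum_scal_r, Hy2; auto. ring. }
  assert (HAG : forall x0 z0, In x0 S -> In z0 T -> AG T K u yc x0 z0 = 0).
  { intros x0 z0 Hx0 Hz0.
    pose proof (Lag0 (fun w => match w with VG a b => ind (a = x0) * ind (b = z0) | _ => 0 end)) as E.
    unfold L in E. rewrite lag in E by auto.
    rewrite (lsum_ext S _ (fun x => ind (x = x0) * lsum T (fun z => ind (z = z0) * AG T K u yc x z))) in E.
    2:{ intros x _. rewrite <- lsum_scal. apply lsum_ext. intros z _.
        rewrite lsum_zero by (intros; ring). ring. }
    rewrite lsum_ind in E by auto. rewrite lsum_ind in E by auto. auto. }
  assert (HAH : forall x0 z0, In x0 S -> In z0 T -> AH S K v yc x0 z0 = 0).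
  { intros x0 z0 Hx0 Hz0.
    pose proof (Lag0 (fun w => match w with VH a b => ind (a = x0) * ind (b = z0) | _ => 0 end)) as E.
    unfold L in E. rewrite lag in E by auto.
    rewrite (lsum_ext S _ (fun x => ind (x = x0) * lsum T (fun z => ind (z = z0) * AH S K v yc x z))) in E.
    2:{ intros x _. rewrite <- lsum_scal. apply lsum_ext. intros z _.
        rewrite lsum_zero by (intros; ring). ring. }
    rewrite lsum_ind in E by auto. rewrite lsum_ind in E by auto. auto. }
  assert (HAS : forall x0 z0 k0, In x0 S -> In z0 T -> In k0 K -> AS S T K D yc x0 z0 k0 = 0).
  { intros x0 z0 k0 Hx0 Hz0 Hk0.
    pose proof (Lag0 (fun w => match w with VS a b k => ind (a = x0) * ind (b = z0) * ind (k = k0) | _ => 0 end)) as E.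
    unfold L in E. rewrite lag in E by auto.
    rewrite (lsum_ext S _ (fun x => ind (x = x0) * lsum T (fun z => ind (z = z0) *
        lsum K (fun k => ind (k = k0) * AS S T K D yc x z k)))) in E.
    2:{ intros x _. rewrite <- lsum_scal. apply lsum_ext. intros z _.
        rewrite <- lsum_scal. rewrite <- lsum_scal.
        transitivity (lsum K (fun k => ind (x = x0) * ind (z = z0) * ind (k = k0) * AS S T K D yc x z k)); [ring|].
        apply lsum_ext; intros. ring. }
    rewrite lsum_ind in E by auto. rewrite lsum_ind in E by auto. rewrite lsum_ind in E by auto. auto. }
  unfold L in Hy3. rewrite rhs_cstrs in Hy3.
  set (lam := yc (C9 S T K D)) in *.
  assert (Hlam : 0 <= lam) by (apply Hy1; apply in_c9).
  assert (Hy7 : forall x z k, In x S -> In z T -> In k K -> 0 <= yc (C7 x z k))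
    by (intros; apply Hy1; apply in_c7; auto).
  assert (Hy8 : forall x z k, In x S -> In z T -> In k K -> 0 <= yc (C8 x z k))
    by (intros; apply Hy1; apply in_c8; auto).
  assert (Hs78 : forall x z k, In x S -> In z T -> In k K -> yc (C7 x z k) + yc (C8 x z k) = lam).
  { intros x z k Hx Hz Hk. pose proof (HAS x z k Hx Hz Hk) as E. unfold AS in E. fold lam in E. lra. }
  set (f := fun x => yc (C3 T u x) - yc (C4 T u x)).
  set (g := fun z => yc (C5 S v z) - yc (C6 S v z)).
  assert (Hf : forall x z, In x S -> In z T -> - f x <= lsum K (fun k => (yc (C7 x z k) - yc (C8 x z k)) * x k)).
  { intros x z Hx Hz. pose proof (HAG x z Hx Hz) as E. unfold AG in E.
    pose proof (Hy1 _ (in_c1 S T K u v D x z Hx Hz)). unfold f. lra. }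
  assert (Hg : forall x z, In x S -> In z T -> lsum K (fun k => (yc (C7 x z k) - yc (C8 x z k)) * z k) <= g z).
  { intros x z Hx Hz. pose proof (HAH x z Hx Hz) as E. unfold AH in E.
    pose proof (Hy1 _ (in_c2 S T K u v D x z Hx Hz)). unfold g. lra. }
  change (lsum S (fun x => f x * u x) + lsum T (fun z => g z * v z) + lam * D < 0) in Hy3.
  assert (HSne : S <> []).
  { intros E. destruct Hu as [_ [_ [_ H1]]]. rewrite (fsum_eq_lsum u S) in H1 by (auto; intros; apply HSe; auto).
    rewrite E in H1. rewrite lsum_nil in H1. lra. }
  assert (HTne : T <> []).
  { intros E. destruct Hv as [_ [_ [_ H1]]]. rewrite (fsum_eq_lsum v T) in H1 by (auto; intros; apply HTe; auto).
    rewrite E in H1. rewrite lsum_nil in H1. lra. }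
  assert (Hup : forall x, 0 <= u x) by (destruct Hu; auto).
  assert (Hvp : forall x, 0 <= v x) by (destruct Hv; auto).
  destruct (Req_dec_T lam 0) as [E0|E0].
  - assert (Z : forall x z (p : point), In x S -> In z T -> lsum K (fun k => (yc (C7 x z k) - yc (C8 x z k)) * p k) = 0).
    { intros x z p Hx Hz. apply lsum_zero. intros k Hk.
      pose proof (Hy7 x z k Hx Hz Hk). pose proof (Hy8 x z k Hx Hz Hk). pose proof (Hs78 x z k Hx Hz Hk).
      replace (yc (C7 x z k)) with 0 by lra. replace (yc (C8 x z k)) with 0 by lra. ring. }
    destruct S as [|s0 S']; [congruence|]. destruct T as [|t0 T']; [congruence|].
    assert (0 <= lsum (s0 :: S') (fun x => f x * u x)).
    { apply lsum_nonneg. intros x Hx. pose proof (Hf x t0 Hx (or_introl eq_refl)).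
      rewrite Z in H by (auto; left; auto). apply Rmult_le_pos; [lra| auto]. }
    assert (0 <= lsum (t0 :: T') (fun z => g z * v z)).
    { apply lsum_nonneg. intros z Hz. pose proof (Hg s0 z (or_introl eq_refl) Hz).
      rewrite Z in H0 by (auto; left; auto). apply Rmult_le_pos; [lra| auto]. }
    rewrite E0 in Hy3. lra.
  - assert (Hl : 0 < lam) by lra.
    set (w := fun x z k => (yc (C7 x z k) - yc (C8 x z k)) / lam).
    assert (HD1 : D1 n (Phi n S T w)).
    { apply Phi_D1; auto. intros x z k Hx Hz Hk. unfold w.
      pose proof (Hy7 x z k Hx Hz Hk). pose proof (Hy8 x z k Hx Hz Hk). pose proof (Hs78 x z k Hx Hz Hk).
      unfold Rdiv. rewrite Rabs_mult, Rabs_inv, (Rabs_right lam) by lra.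
      apply Rmult_le_reg_r with lam; [lra|]. rewrite Rmult_assoc, Rinv_l, Rmult_1_r, Rmult_1_l by lra.
      apply Rabs_le. split; lra. }
    assert (Hlin : forall x z (p : point), linw n w x z p =
       lsum K (fun k => (yc (C7 x z k) - yc (C8 x z k)) * p k) / lam).
    { intros. unfold linw, w, Rdiv. rewrite <- lsum_scal_r. apply lsum_ext; intros; ring. }
    assert (Hlow : forall x, In x S -> - f x / lam <= Phi n S T w x).
    { intros x Hx. apply Phi_lower with x; auto. intros z Hz. rewrite Hlin.
      unfold Rdiv. apply Rmult_le_compat_r; [left; apply Rinv_0_lt_compat; auto| apply Hf; auto]. }
    assert (Hupp : forall z, In z T -> Phi n S T w z <= g z / lam).
    { intros z Hz. apply Phi_upper with z; auto. intros x Hx. rewrite Hlin.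
      unfold Rdiv. apply Rmult_le_compat_r; [left; apply Rinv_0_lt_compat; auto| apply Hg; auto]. }
    pose proof (dstar_ge n X u v _ HX Hu Hv HD1) as HDge. fold D in HDge.
    rewrite (fsum_eq_lsum u S) in HDge by (auto; intros; apply HSe; auto).
    rewrite (fsum_eq_lsum v T) in HDge by (auto; intros; apply HTe; auto).
    assert (H1 : - lsum S (fun x => f x * u x) <= lam * lsum S (fun x => u x * Phi n S T w x)).
    { rewrite <- lsum_scal. rewrite <- (Rmult_1_l (lsum S (fun x => f x * u x))).
      rewrite Ropp_mult_distr_l, <- lsum_scal. apply lsum_le. intros x Hx.
      pose proof (Hlow x Hx). apply Rmult_le_compat_l with (r := lam * u x) in H; [|apply Rmult_le_pos; lra || auto].
      replace (lam * u x * (- f x / lam)) with (-1 * (f x * u x)) in H by (field; lra). lra. }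
    assert (H2 : lam * lsum T (fun z => v z * Phi n S T w z) <= lsum T (fun z => g z * v z)).
    { rewrite <- lsum_scal. apply lsum_le. intros z Hz.
      pose proof (Hupp z Hz). apply Rmult_le_compat_l with (r := lam * v z) in H; [|apply Rmult_le_pos; lra || auto].
      replace (lam * v z * (g z / lam)) with (g z * v z) in H by (field; lra). lra. }
    apply Rmult_le_compat_l with (r := lam) in HDge; [|lra].
    lra.
Qed.


Lemma transport_bound {A : Type} n (X : point -> Prop) (r : point -> A -> R)
  (u v : point -> R) S T (sig sig' : point -> A -> R) (gam gam' : point -> point -> R) :
  (forall x, In x S -> X x) -> (forall y, In y T -> X y) ->
  (forall x, In x S -> distf (fun _ : A => True) (sig x)) ->
  (forall x y, In x S -> In y T -> 0 <= gam x y /\ 0 <= gam' x y) ->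
  (forall x, In x S -> lsum T (fun y => gam x y) = u x) ->
  (forall y, In y T -> forall h, v y * fsum (sig' y) h = lsum S (fun x => gam' x y * fsum (sig x) h)) ->
  (forall x y a al be, X x -> X y -> 0 <= al -> 0 <= be ->
     Rabs (al * r x a - be * r y a) <= norm1 n (lincomb al x be y)) ->
  Rabs (lsum S (fun x => u x * fsum (sig x) (r x)) - lsum T (fun y => v y * fsum (sig' y) (r y)))
  <= lsum S (fun x => lsum T (fun y => norm1 n (lincomb (gam x y) x (gam' x y) y))).
Proof.
  intros HSX HTX Hsig Hg Hmarg Hsig' Hr.
  rewrite (lsum_ext S _ (fun x => lsum T (fun y => gam x y * fsum (sig x) (r x)))).
  2:{ intros x Hx. rewrite <- Hmarg by auto. rewrite lsum_scal_r. reflexivity. }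
  rewrite (lsum_ext T _ (fun y => lsum S (fun x => gam' x y * fsum (sig x) (r y)))).
  2:{ intros y Hy. apply Hsig'; auto. }
  rewrite <- (lsum_swap S T). rewrite <- lsum_minus.
  eapply Rle_trans; [apply lsum_abs|]. apply lsum_le. intros x Hx.
  rewrite <- lsum_minus.
  eapply Rle_trans; [apply lsum_abs|]. apply lsum_le. intros y Hy.
  destruct (Hsig x Hx) as [Hp [_ [Hs H1]]].
  destruct (Hg x y Hx Hy) as [G1 G2].
  replace (gam x y * fsum (sig x) (r x) - gam' x y * fsum (sig x) (r y))
    with (fsum (sig x) (fun a => gam x y * r x a + (- gam' x y) * r y a)) by (rewrite fsum_hlin; auto; ring).
  eapply Rle_trans; [apply fsum_abs; auto|].
  rewrite <- (Rmult_1_r (norm1 _ _)), <- H1, <- fsum_const.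
  apply fsum_le; auto. intros a _.
  replace (gam x y * r x a + - gam' x y * r y a) with (gam x y * r x a - gam' x y * r y a) by ring.
  apply Hr; auto.
Qed.

Lemma Q_form {A : Type} (q : point -> A -> point -> R) (u : point -> R) S (sig : point -> A -> R) f :
  NoDup S -> (forall x, u x <> 0 -> In x S) ->
  (forall x, In x S -> exists s, fin_supp (sig x) s) ->
  (forall x a, In x S -> exists s, fin_supp (q x a) s) ->
  fsum (fun x' => fsum u (fun x => qext q x (sig x) x')) f =
  lsum S (fun x => u x * fsum (sig x) (fun a => fsum (q x a) f)).
Proof.
  intros HS HSs Hsig Hq.
  assert (Inner : forall x, In x S -> (exists s, fin_supp (qext q x (sig x)) s) /\
     forall f, fsum (qext q x (sig x)) f = fsum (sig x) (fun a => fsum (q x a) f)).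
  { intros x Hx. destruct (Hsig x Hx) as [s [Hs1 Hs2]].
    destruct (fsum_comb s (sig x) (fun a => q x a) (qext q x (sig x))) as [E F].
    - intros a _. apply Hq; auto.
    - intros x'. unfold qext. apply fsum_eq_lsum; auto.
    - split; auto. intros f0. rewrite F. symmetry. apply fsum_eq_lsum; auto. }
  destruct (fsum_comb S u (fun x => qext q x (sig x)) (fun x' => fsum u (fun x => qext q x (sig x) x'))) as [E F].
  - intros x Hx. apply Inner; auto.
  - intros x'. apply fsum_eq_lsum; auto.
  - rewrite F. apply lsum_ext. intros x Hx. f_equal. apply Inner; auto.
Qed.

Lemma part2 n (X : point -> Prop) (A : Type)
  (q : point -> A -> point -> R) (g : point -> A -> R)
  (HXsub : forall x, X x -> simplex n x)
  (Hq : forall x a, X x -> distf X (q x a))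
  (Hqlip : forall x y a f alpha beta, X x -> X y -> D1 n f ->
     0 <= alpha -> 0 <= beta ->
     Rabs (alpha * fsum (q x a) f - beta * fsum (q y a) f)
       <= norm1 n (lincomb alpha x beta y))
  (Hglip : forall x y a alpha beta, X x -> X y ->
     0 <= alpha -> 0 <= beta ->
     Rabs (alpha * g x a - beta * g y a) <= norm1 n (lincomb alpha x beta y)) :
  forall z z', inZ X z -> inZ X z' ->
     forall w, Fhat X q g z w ->
       exists w', Fhat X q g z' w' /\ dZ n w w' <= dZ n z z'.
Proof.
  intros [u y1] [v y2] [Hu _] [Hv _] w [sig [Hsig ->]]. simpl in *.
  pose proof Hu as Hu'. pose proof Hv as Hv'.
  destruct Hu' as [Hup [HuX [Hus Hu1]]]. destruct Hv' as [Hvp [HvX [Hvs Hv1]]].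
  destruct (supp_exact u Hus) as [S [HS HSe]].
  destruct (supp_exact v Hvs) as [T [HT HTe]].
  destruct (plan_exists n X u v S T HXsub Hu Hv HS HSe HT HTe) as [gam [gam' [Hg [Hm1 [Hm2 Hc]]]]].
  set (Dd := dstar n u v) in *.
  set (sig' := fun y => if Req_dec_T (v y) 0 then sig y else
                 fun a => lsum S (fun x => gam' x y / v y * sig x a)).
  assert (HSX : forall x, In x S -> X x) by (intros; apply HuX, HSe; auto).
  assert (HTX : forall y, In y T -> X y) by (intros; apply HvX, HTe; auto).
  assert (Hcomb : forall y, In y T -> (exists s, fin_supp (sig' y) s) /\
     forall h, v y * fsum (sig' y) h = lsum S (fun x => gam' x y * fsum (sig x) h)).
  { intros y Hy. assert (Hv0 : v y <> 0) by (apply HTe; auto).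
    unfold sig'. destruct (Req_dec_T (v y) 0) as [|_]; [contradiction|].
    destruct (fsum_comb S (fun x => gam' x y / v y) sig
        (fun a => lsum S (fun x => gam' x y / v y * sig x a))) as [E F].
    - intros x Hx. destruct (Hsig x (HSX x Hx)) as [_ [_ [Hs _]]]; auto.
    - intros; reflexivity.
    - split; auto. intros h. rewrite F, <- lsum_scal. apply lsum_ext. intros x _. field. auto. }
  assert (Hsig' : forall y, X y -> distf (fun _ : A => True) (sig' y)).
  { intros y Hy. destruct (Req_dec_T (v y) 0) as [E|E].
    - unfold sig'. destruct (Req_dec_T (v y) 0); [auto| contradiction].
    - assert (HyT : In y T) by (apply HTe; auto).
      destruct (Hcomb y HyT) as [Fs Hh].
      assert (0 < v y) by (specialize (Hvp y); lra).
      split; [|split; [auto| split; [auto|]]].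
      + intros a. unfold sig'. destruct (Req_dec_T (v y) 0); [contradiction|].
        apply lsum_nonneg. intros x Hx. destruct (Hsig x (HSX x Hx)) as [Hp _].
        apply Rmult_le_pos; [|apply Hp]. unfold Rdiv. apply Rmult_le_pos; [apply (Hg x y Hx HyT)|].
        left; apply Rinv_0_lt_compat; auto.
      + apply Rmult_eq_reg_l with (v y); auto. rewrite Hh, Rmult_1_r, <- (Hm2 y HyT).
        apply lsum_ext. intros x Hx. destruct (Hsig x (HSX x Hx)) as [_ [_ [_ H1]]]. rewrite H1; ring. }
  exists ((fun x' => fsum v (fun x => qext q x (sig' x) x')), fsum v (fun x => gext g x (sig' x))).
  split; [exists sig'; split; auto|].
  assert (HDnn : 0 <= Dd) by apply dstar_nonneg.
  unfold dZ; simpl. fold Dd.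
  apply Rle_trans with Dd; [|apply Rmax_l].
  apply Rmax_lub.
  - apply dstar_le; auto. intros f Hf.
    assert (HsigS : forall x, In x S -> exists s, fin_supp (sig x) s).
    { intros x Hx. destruct (Hsig x (HSX x Hx)) as [_ [_ [Hs _]]]; auto. }
    assert (HsigT : forall y, In y T -> exists s, fin_supp (sig' y) s) by (intros y Hy; apply (proj1 (Hcomb y Hy))).
    assert (HqS : forall x a, In x S -> exists s, fin_supp (q x a) s)
      by (intros x a Hx; destruct (Hq x a (HSX x Hx)) as [_ [_ [Hs _]]]; auto).
    assert (HqT : forall x a, In x T -> exists s, fin_supp (q x a) s)
      by (intros x a Hx; destruct (Hq x a (HTX x Hx)) as [_ [_ [Hs _]]]; auto).
    rewrite (Q_form q u S sig f HS (fun x Hx => proj2 (HSe x) Hx) HsigS HqS).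
    rewrite (Q_form q v T sig' f HT (fun x Hx => proj2 (HTe x) Hx) HsigT HqT).
    eapply Rle_trans; [apply Rle_abs|]. eapply Rle_trans; [|exact Hc].
    apply (transport_bound n X (fun x a => fsum (q x a) f) u v S T sig sig' gam gam');
    intros; first [solve [apply HSX; auto] | solve [apply HTX; auto] | solve [apply Hsig; auto] | solve [apply Hg; auto] | solve [apply Hm1; auto] | solve [apply Hcomb; auto] | solve [apply Hqlip; auto]].
  - unfold gext.
    rewrite (fsum_eq_lsum u S), (fsum_eq_lsum v T) by (auto; intros; apply HSe || apply HTe; auto).
    eapply Rle_trans; [|exact Hc].
    apply (transport_bound n X (fun x a => g x a) u v S T sig sig' gam gam');
    intros; first [solve [apply HSX; auto] | solve [apply HTX; auto] | solve [apply Hsig; auto] | solve [apply Hg; auto] | solve [apply Hm1; auto] | solve [apply Hcomb; auto] | solve [apply Hglip; auto]].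
Qed.

Theorem mainTheorem16 (n : nat) (X : point -> Prop) (A : Type)
  (q : point -> A -> point -> R) (g : point -> A -> R)
  (HXsub : forall x, X x -> simplex n x)
  (HXcpt : compact1 n X)
  (Hq : forall x a, X x -> distf X (q x a))
  (Hg : forall x a, X x -> 0 <= g x a <= 1)
  (Hqlip : forall x y a f alpha beta, X x -> X y -> D1 n f ->
     0 <= alpha -> 0 <= beta ->
     Rabs (alpha * fsum (q x a) f - beta * fsum (q y a) f)
       <= norm1 n (lincomb alpha x beta y))
  (Hglip : forall x y a alpha beta, X x -> X y ->
     0 <= alpha -> 0 <= beta ->
     Rabs (alpha * g x a - beta * g y a) <= norm1 n (lincomb alpha x beta y)) :
  (forall z z' l, inZ X z -> inZ X z' -> 0 <= l <= 1 ->
     forall w, Fhat X q g (combZ l z z') w <->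
       exists w1 w2, Fhat X q g z w1 /\ Fhat X q g z' w2 /\ w = combZ l w1 w2)
  /\
  (forall z z', inZ X z -> inZ X z' ->
     forall w, Fhat X q g z w ->
       exists w', Fhat X q g z' w' /\ dZ n w w' <= dZ n z z').
Proof.
  split.
  - apply part1.
  - apply (part2 n X A q g HXsub Hq Hqlip Hglip).
Qed.
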